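(* Let $h$ be a hive all of whose flatspaces are small triangles or small rhombi, and let $G$ be its associated graph. If $h$ is a vertex (extreme point) of the polytope of all hives having the same border labels as $h$, then $G$ is acyclic (contains no cycle).
   Context: Fix $n\ge1$. Hive vertices: $H=\{(p,q)\in\mathbb{Z}^2:p,q\ge0,\ p+q\le n\}$, placed in the plane at $p(1,0)+q(1/2,\sqrt3/2)$, forming a big triangle subdivided into $n^2$ small unit triangles. A rhombus is the union of two small triangles sharing an edge; for integers $p,q\ge0$ with $p+q\le n-2$ the rhombus inequalities are $h(p+1,q)+h(p,q+1)\ge h(p,q)+h(p+1,q+1)$, $h(p+1,q)+h(p+1,q+1)\ge h(p,q+1)+h(p+2,q)$, $h(p,q+1)+h(p+1,q+1)\ge h(p+1,q)+h(p,q+2)$ (obtuse-vertex sum $\ge$ acute-vertex sum). A hive is $h:H\to\mathbb{R}$ satisfying all of them. Border $B$: vertices with $p=0$, $q=0$ or $p+q=n$; the set of hives with prescribed values on $B$ is a compact polytope. A rhombus is flat if equality holds. Flatspaces are the unions of small triangles in the classes of the equivalence relation generated by ''share an edge and form a flat rhombus''. Associated graph $G$ (defined when every flatspace is a small triangle or a small rhombus): $G$ has one (blue) vertex for each flatspace that is a small triangle, and one (red) vertex for each lattice edge that is a side of a flatspace; each blue vertex is joined to the three red vertices on the sides of its triangle, and for each rhombus flatspace, the red vertices on each pair of opposite sides of the rhombus are joined by an edge. *)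

(* Defs.v *)
From HB Require Import structures.
From mathcomp Require Import all_boot all_order all_algebra.
From mathcomp Require Import reals.
From Stdlib Require Import Relations.Relation_Operators.
From Stdlib Require List.
Set Implicit Arguments. Unset Strict Implicit. Unset Printing Implicit Defensive.
Import Order.TTheory GRing.Theory Num.Theory.
Local Open Scope ring_scope.

(** Hive vertices H = {(p,q) : p + q <= n}. Labelings are functions
    nat -> nat -> R; only their values on H matter. *)
Definition inH (n p q : nat) : bool := (p + q <= n)%N.

Definition onB (n p q : nat) : bool :=
  inH n p q && [|| p == 0%N, q == 0%N | (p + q == n)%N].

Definition hive {R : realType} (n : nat) (h : nat -> nat -> R) : Prop :=
  forall p q : nat, (p + q + 2 <= n)%N ->
    [/\ h p.+1 q + h p q.+1 >= h p q + h p.+1 q.+1,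
        h p.+1 q + h p.+1 q.+1 >= h p q.+1 + h p.+2 q
      & h p q.+1 + h p.+1 q.+1 >= h p.+1 q + h p q.+2].

(** Small triangles: Up p q has vertices (p,q),(p+1,q),(p,q+1) (p+q <= n-1);
    Down p q has vertices (p+1,q),(p,q+1),(p+1,q+1) (p+q <= n-2). *)
Inductive tri := Up of nat & nat | Down of nat & nat.

Definition validTri (n : nat) (t : tri) : Prop :=
  match t with
  | Up p q => (p + q + 1 <= n)%N
  | Down p q => (p + q + 2 <= n)%N
  end.

(** Lattice edges, p + q <= n - 1:
    LE Hor p q  = (p,q)--(p+1,q),
    LE Slo p q  = (p,q)--(p,q+1),
    LE Diag p q = (p+1,q)--(p,q+1). *)
Inductive dir := Hor | Slo | Diag.
Inductive ledge := LE of dir & nat & nat.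

Definition dir_of (e : ledge) : dir := let: LE d _ _ := e in d.

Definition side (t : tri) (e : ledge) : Prop :=
  match t with
  | Up p q => e = LE Hor p q \/ e = LE Slo p q \/ e = LE Diag p q
  | Down p q => e = LE Slo p.+1 q \/ e = LE Hor p q.+1 \/ e = LE Diag p q
  end.

Definition upair (t1 t2 a b : tri) : Prop :=
  (t1 = a /\ t2 = b) \/ (t1 = b /\ t2 = a).

(** Every pair of small triangles
    sharing an edge is {Down p q, Up p q}, {Down p q, Up (p+1) q} or
    {Down p q, Up p (q+1)} with p + q <= n - 2. *)
Definition rhomb_flat {R : realType} (n : nat) (h : nat -> nat -> R)
    (t1 t2 : tri) : Prop :=
  exists p q : nat, (p + q + 2 <= n)%N /\
   [\/ upair t1 t2 (Down p q) (Up p q) /\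
         h p.+1 q + h p q.+1 = h p q + h p.+1 q.+1,
       upair t1 t2 (Down p q) (Up p.+1 q) /\
         h p.+1 q + h p.+1 q.+1 = h p q.+1 + h p.+2 q
     | upair t1 t2 (Down p q) (Up p q.+1) /\
         h p q.+1 + h p.+1 q.+1 = h p.+1 q + h p q.+2].

(** The equivalence relation generated by "share an edge and form a flat
    rhombus"; the flatspace of a valid triangle t is its class. *)
Definition flat_equiv {R : realType} (n : nat) (h : nat -> nat -> R) :
  tri -> tri -> Prop := clos_refl_sym_trans tri (rhomb_flat n h).

Definition fs_is_triangle {R : realType} n (h : nat -> nat -> R) (t : tri) :=
  forall t', flat_equiv n h t t' -> t' = t.

Definition fs_is_rhombus {R : realType} n (h : nat -> nat -> R) (t : tri) :=
  exists t', rhomb_flat n h t t' /\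
    forall t'', flat_equiv n h t t'' -> t'' = t \/ t'' = t'.

Definition flatspaces_small {R : realType} n (h : nat -> nat -> R) : Prop :=
  forall t, validTri n t -> fs_is_triangle n h t \/ fs_is_rhombus n h t.

(** e is a side of the flatspace containing t: e is an edge of exactly one
    small triangle of that flatspace (i.e. e lies on its boundary). *)
Definition fs_side {R : realType} n (h : nat -> nat -> R) (t : tri)
    (e : ledge) : Prop :=
  (exists t1, flat_equiv n h t t1 /\ side t1 e) /\
  (forall t1 t2, flat_equiv n h t t1 -> flat_equiv n h t t2 ->
     side t1 e -> side t2 e -> t1 = t2).

Inductive gvert := Blue of tri | Red of ledge.

Definition is_gvert {R : realType} n (h : nat -> nat -> R) (v : gvert) : Prop :=
  match v with
  | Blue t => validTri n t /\ fs_is_triangle n h t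
  | Red e => exists t, validTri n t /\ fs_side n h t e
  end.

(** Edges of G: blue triangle -- red sides of it; red -- red for the two
    pairs of opposite (= distinct parallel) sides of a rhombus flatspace. *)
Definition gadj {R : realType} n (h : nat -> nat -> R) (v w : gvert) : Prop :=
  match v, w with
  | Blue t, Red e | Red e, Blue t =>
      validTri n t /\ fs_is_triangle n h t /\ side t e
  | Red e1, Red e2 =>
      exists t, [/\ validTri n t, fs_is_rhombus n h t,
                    fs_side n h t e1, fs_side n h t e2 &
                    e1 <> e2 /\ dir_of e1 = dir_of e2]
  | Blue _, Blue _ => False
  end.

Fixpoint rel_path (r : gvert -> gvert -> Prop) (x : gvert) (s : seq gvert)
  : Prop :=
  match s with
  | [::] => True
  | y :: s' => r x y /\ rel_path r y s'
  end.

Definition acyclic {R : realType} n (h : nat -> nat -> R) : Prop :=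
  ~ exists (v0 : gvert) (s : seq gvert),
      [/\ (2 <= size s)%N, List.NoDup (v0 :: s),
          (forall v, List.In v (v0 :: s) -> is_gvert n h v),
          rel_path (gadj n h) v0 s & gadj n h (last v0 s) v0].

Definition is_extreme_hive {R : realType} n (h : nat -> nat -> R) : Prop :=
  forall (g1 g2 : nat -> nat -> R) (t : R),
    hive n g1 -> hive n g2 ->
    (forall p q, onB n p q -> g1 p q = h p q) ->
    (forall p q, onB n p q -> g2 p q = h p q) ->
    0 < t < 1 ->
    (forall p q, inH n p q -> h p q = t * g1 p q + (1 - t) * g2 p q) ->
    forall p q, inH n p q -> g1 p q = g2 p q.

(* Main.v *)
Require Import Defs.
From HB Require Import structures.
From mathcomp Require Import all_boot all_order all_algebra.
From mathcomp Require Import reals boolp.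
From mathcomp Require Import zify ring lra.
From Stdlib Require Import Relations.Relation_Operators.
From Stdlib Require List.
Set Implicit Arguments. Unset Strict Implicit. Unset Printing Implicit Defensive.
Import Order.TTheory GRing.Theory Num.Theory.
Local Open Scope ring_scope.

Definition upT (e : ledge) : tri := let: LE _ p q := e in Up p q.
Definition downT (e : ledge) : tri :=
  match e with
  | LE Hor p q => Down p q.-1
  | LE Slo p q => Down p.-1 q
  | LE Diag p q => Down p q
  end.
Definition isUp (t : tri) : bool := if t is Up _ _ then true else false.

Lemma side_upT e : side (upT e) e.
Proof. by case: e => [[] p q] /=; auto. Qed.

Lemma side_cases t e : side t e -> t = upT e \/ t = downT e.
Proof.
case: t => a b /= [->|[->|->]] /=; auto.
Qed.

Lemma side_Up a b e : side (Up a b) e -> upT e = Up a b.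
Proof. by move=> /= [->|[->|->]]. Qed.

Lemma side_dir t a b : side t a -> side t b -> dir_of a = dir_of b -> a = b.
Proof.
by case: t => p q /= [->|[->|->]] [->|[->|->]].
Qed.

Lemma side_share a b c d s s' : side (Up a b) s -> side (Down c d) s ->
  side (Up a b) s' -> side (Down c d) s' -> s = s'.
Proof.
move=> H1 H2 H3 H4; destruct H1 as [|[|]]; destruct H2 as [|[|]];
destruct H3 as [|[|]]; destruct H4 as [|[|]]; subst; try congruence;
repeat match goal with H : LE _ _ _ = LE _ _ _ |- _ => injection H; clear H; intros end;
subst; try lia.
Qed.

Lemma nth_In (T : Type) (x0 : T) (s : seq T) i : (i < size s)%N -> List.In (nth x0 s i) s.
Proof.
elim: s i => [|x s IH] [|i] //= Hi; first by left.
by right; apply: IH.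
Qed.

Lemma NoDup_nth_inj (T : Type) (x0 : T) (s : seq T) i j : List.NoDup s ->
  (i < size s)%N -> (j < size s)%N -> nth x0 s i = nth x0 s j -> i = j.
Proof.
elim: s i j => [|x s IH] i j //= ND; inversion ND; subst.
case: i => [|i]; case: j => [|j] //= Hi Hj.
- by move=> E; case: H1; rewrite E; apply: nth_In.
- by move=> E; case: H1; rewrite -E; apply: nth_In.
- by move=> E; congr S; apply: IH.
Qed.

Lemma rel_path_nth (r : gvert -> gvert -> Prop) x0 x s i :
  rel_path r x s -> (i < size s)%N -> r (nth x0 (x :: s) i) (nth x0 (x :: s) i.+1).
Proof.
elim: s x i => [|y s IH] x i //= [Hxy Hp] Hi.
case: i Hi => [|i] Hi //=.
by have := IH y i Hp Hi.
Qed.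


Section Hive.
Variable R : realType.
Variable n : nat.
Variable h : nat -> nat -> R.
Hypothesis Hsmall : flatspaces_small n h.

Local Notation rf := (rhomb_flat n h).
Local Notation fe := (flat_equiv n h).

Lemma rf_sym t1 t2 : rf t1 t2 -> rf t2 t1.
Proof.
move=> [p [q [Hpq H]]]; exists p, q; split => //.
by case: H => [[U E]|[U E]|[U E]]; [constructor 1|constructor 2|constructor 3];
  split => //; case: U => [[-> ->]|[-> ->]]; [right|left|right|left|right|left].
Qed.

Lemma rf_irr t : ~ rf t t.
Proof.
move=> [p [q [Hpq H]]].
by case: H => [[U E]|[U E]|[U E]]; case: U => [[-> E']|[-> E']].
Qed.

Lemma rf_valid t1 t2 : rf t1 t2 -> validTri n t1 /\ validTri n t2.
Proof.
move=> [p [q [Hpq H]]].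
case: H => [[U E]|[U E]|[U E]]; case: U => [[-> ->]|[-> ->]] /=; split; lia.
Qed.

Lemma rf_isUp t1 t2 : rf t1 t2 -> isUp t1 = ~~ isUp t2.
Proof.
move=> [p [q [Hpq H]]].
by case: H => [[U E]|[U E]|[U E]]; case: U => [[-> ->]|[-> ->]].
Qed.

Lemma fe_refl t : fe t t. Proof. exact: rst_refl. Qed.
Lemma fe_sym t1 t2 : fe t1 t2 -> fe t2 t1. Proof. exact: rst_sym. Qed.
Lemma fe_trans t1 t2 t3 : fe t1 t2 -> fe t2 t3 -> fe t1 t3.
Proof. exact: rst_trans. Qed.
Lemma fe_step t1 t2 : rf t1 t2 -> fe t1 t2. Proof. exact: rst_step. Qed.

Lemma rh_class Tu Td : rf Tu Td -> forall t, fe Tu t -> t = Tu \/ t = Td.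
Proof.
move=> H; have [vu vd] := rf_valid H.
case: (Hsmall vu) => [Htr|[t' [Ht' Hcl]]].
  by have := Htr _ (fe_step H) => E; subst; case: (rf_irr H).
have : Td = Tu \/ Td = t' by apply: Hcl; apply: fe_step.
case=> [E|E]; first by subst; case: (rf_irr H).
by subst => t /Hcl.
Qed.

Lemma fe_valid t t' : validTri n t -> fe t t' -> validTri n t'.
Proof.
move=> vt Hf; case: (Hsmall vt) => [Htr|[t2 [Ht2 Hcl]]].
  by rewrite (Htr _ Hf).
case: (rh_class Ht2 Hf) => ->; first done.
exact: (rf_valid Ht2).2.
Qed.

Lemma rhombus_valid t : fs_is_rhombus n h t -> validTri n t.
Proof. by move=> [t' [H _]]; exact: (rf_valid H).1. Qed.

Lemma blue_not_rf t t' : fs_is_triangle n h t -> ~ rf t t'.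
Proof.
move=> Htr H; have := Htr _ (fe_step H) => E; subst; exact: rf_irr H.
Qed.

Lemma blue_not_fe_rhombus t T : fs_is_triangle n h T -> fs_is_rhombus n h t ->
  ~ fe t T.
Proof.
move=> Htr [t' [Ht' _]] Hf.
have E1 := Htr _ (fe_sym Hf).
have E2 := Htr _ (fe_trans (fe_sym Hf) (fe_step Ht')).
subst; exact: rf_irr Ht'.
Qed.

Lemma fs_side_fe t t' e : fe t t' -> fs_side n h t e -> fs_side n h t' e.
Proof.
move=> Hf [[t1 [H1 S1]] U]; split.
  by exists t1; split => //; apply: fe_trans (fe_sym Hf) H1.
move=> a b Ha Hb; apply: U; exact: fe_trans Hf _.
Qed.

Definition adjT (e : ledge) (y : gvert) (T0 : tri) : Prop :=
  side T0 e /\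
  match y with
  | Blue T => [/\ T = T0, validTri n T0 & fs_is_triangle n h T0]
  | Red e2 => exists t, [/\ fs_is_rhombus n h t, fe t T0, fs_side n h t e2,
                           e <> e2 & dir_of e = dir_of e2]
  end.

Lemma adjT_valid e y T0 : adjT e y T0 -> validTri n T0.
Proof.
case: y => [T|e2] [S H]; first by case: H.
case: H => t [Hr Hf _ _ _]; exact: fe_valid (rhombus_valid Hr) Hf.
Qed.

Lemma lemA e y : gadj n h (Red e) y ->
  exists T0, adjT e y T0 /\ (T0 = upT e \/ T0 = downT e).
Proof.
case: y => [T|e2] /=.
  move=> [vT [Htr S]]; exists T; split; last exact: side_cases.
  by split.
move=> [t [vt Hr [[t1 [H1 S1]] _] Hs2 [ne de]]].
exists t1; split; last exact: side_cases.
by split => //; exists t.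
Qed.

Lemma lemB e y y' T0 : adjT e y T0 -> adjT e y' T0 -> y = y'.
Proof.
case: y => [T|e2] [S H]; case: y' => [T'|e2'] [_ H'].
- by case: H => -> _ _; case: H' => -> _ _.
- case: H => -> _ Htr; case: H' => t [Hr Hf _ _ _].
  by case: (blue_not_fe_rhombus Htr Hr Hf).
- case: H' => -> _ Htr; case: H => t [Hr Hf _ _ _].
  by case: (blue_not_fe_rhombus Htr Hr Hf).
case: H => t [Hr Hf [[t1 [H1 S1]] _] ne de].
case: H' => t2 [Hr2 Hf2 [[t1' [H1' S1']] _] ne' de'].
case: (Hr) => t' [Ht' _].
have C := rh_class Ht'.
have n1 : t1 <> T0 by move=> E; subst; apply: ne; apply: side_dir S S1 de.
have n1' : t1' <> T0 by move=> E; subst; apply: ne'; apply: side_dir S S1' de'.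
have HT0 := C _ Hf.
have Ht1 := C _ H1.
have Ht1' := C _ (fe_trans Hf (fe_trans (fe_sym Hf2) H1')).
have E : t1 = t1'.
  by case: HT0 => E0; case: Ht1 => E1; case: Ht1' => E2; subst.
subst t1'; congr Red; apply: side_dir S1 S1' _; by rewrite -de -de'.
Qed.

Variable v0 : gvert.
Variable s : seq gvert.
Hypothesis Hsz : (2 <= size s)%N.
Hypothesis Hnd : List.NoDup (v0 :: s).
Hypothesis Hg : forall v, List.In v (v0 :: s) -> is_gvert n h v.
Hypothesis Hp : rel_path (gadj n h) v0 s.
Hypothesis Hl : gadj n h (last v0 s) v0.

Local Notation N := (size s).+1.
Local Open Scope nat_scope.
Definition vv (i : nat) : gvert := nth (Blue (Up 0 0)) (v0 :: s) (i %% N).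
Local Notation v := vv.

Lemma N_gt2 : (2 < N)%N. Proof. by []. Qed.

Lemma v_mod i : v (i %% N) = v i.
Proof. by rewrite /vv modn_mod. Qed.

Lemma v_addN i : v (i + N) = v i.
Proof. by rewrite /vv modnDr. Qed.

Lemma v_inj i j : v i = v j -> i %% N = j %% N.
Proof.
rewrite /vv => E; apply: (@NoDup_nth_inj _ (Blue (Up 0 0)) _ _ _ Hnd _ _ E); by rewrite ltn_mod.
Qed.

Lemma v_congr i j : i %% N = j %% N -> v i = v j.
Proof. by rewrite /vv => ->. Qed.

Lemma v_nextE i j : v i = v j -> v i.+1 = v j.+1.
Proof.
move/v_inj => E; apply: v_congr.
by rewrite -addn1 -[j.+1]addn1 -modnDml E modnDml.
Qed.

Lemma v_gvert i : is_gvert n h (v i).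
Proof. apply: Hg; apply: nth_In; by rewrite ltn_mod. Qed.

Lemma v_adj i : gadj n h (v i) (v i.+1).
Proof.
rewrite /vv.
have Hm : (i %% N < N)%N by rewrite ltn_mod.
case: (ltnP (i %% N).+1 N) => Hlt.
  have -> : i.+1 %% N = (i %% N).+1.
    by rewrite -addn1 -modnDml modn_small // addn1.
  by apply: rel_path_nth.
have Ei : i %% N = size s by lia.
have -> : i.+1 %% N = 0%N.
  by rewrite -addn1 -modnDml Ei addn1 modnn.
rewrite Ei /=.
have := nth_last (Blue (Up 0 0)) (v0 :: s).
rewrite /= => E; rewrite E; exact: Hl.
Qed.

Lemma modD_small i k : k <= N ->
  (i + k) %% N = if i %% N + k < N then i %% N + k else i %% N + k - N.
Proof.
move=> Hk; rewrite -modnDml.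
have Hm : i %% N < N by rewrite ltn_mod.
case: ifP => H; first by rewrite modn_small.
have -> : i %% N + k = N + (i %% N + k - N) by lia.
rewrite modnDl modn_small; lia.
Qed.

Lemma v_neq1 i : v i <> v i.+1.
Proof.
move/v_inj; rewrite -[i.+1]addn1 modD_small //.
have Hm : i %% N < N by rewrite ltn_mod.
case: ifP => ?; lia.
Qed.

Lemma v_neq2 i : v i <> v i.+2.
Proof.
have HN : 2 <= N by lia.
move/v_inj; rewrite -[i.+2]addn2 (modD_small _ HN).
have Hm : i %% N < N by rewrite ltn_mod.
case: ifP => ?; lia.
Qed.

Local Open Scope ring_scope.

Lemma v_pred k : exists k', v k'.+1 = v k /\ v k'.+2 = v k.+1.
Proof.
exists (k + size s); split.
  have -> : (k + size s).+1 = (k + (size s).+1)%N by lia.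
  by rewrite v_addN.
have -> : (k + size s).+2 = (k.+1 + (size s).+1)%N by lia.
by rewrite v_addN.
Qed.

Lemma v_prevE i j : v i.+1 = v j.+1 -> v i = v j.
Proof.
move=> E.
have -> : v i = v (i.+1 + size s) by rewrite -(v_addN i); congr vv; lia.
have -> : v j = v (j.+1 + size s) by rewrite -(v_addN j); congr vv; lia.
apply: v_congr; rewrite -modnDml -[in RHS]modnDml.
by rewrite (v_inj E).
Qed.

Lemma gadj_sym x y : gadj n h x y -> gadj n h y x.
Proof.
case: x => [t|e]; case: y => [t'|e'] //=.
move=> [t0 [vt Hr S1 S2 [ne de]]]; exists t0; split => //; split => //.
by move=> E; apply: ne.
Qed.

Lemma RedCyc k e : v k.+1 = Red e ->
  exists Tm Tp, [/\ adjT e (v k) Tm, adjT e (v k.+2) Tp, Tm <> Tp,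
     (Tm = upT e \/ Tm = downT e) /\ (Tp = upT e \/ Tp = downT e) &
     ~ adjT e (v k) Tp /\ ~ adjT e (v k.+2) Tm].
Proof.
move=> E.
have A1 : gadj n h (Red e) (v k) by rewrite -E; apply: gadj_sym; apply: v_adj.
have A2 : gadj n h (Red e) (v k.+2) by rewrite -E; apply: v_adj.
have [Tm [Hm Cm]] := lemA A1.
have [Tp [Hp' Cp]] := lemA A2.
have ne := @v_neq2 k.
exists Tm, Tp; split => //.
- by move=> Eq; subst; apply: ne; apply: lemB Hm Hp'.
- split.
  + by move=> H; apply: ne; apply: lemB H Hp'.
  + by move=> H; apply: ne; apply: lemB Hm H.
Qed.

Lemma updown e T1 T2 : T1 <> T2 -> (T1 = upT e \/ T1 = downT e) ->
  (T2 = upT e \/ T2 = downT e) -> isUp T1 = ~~ isUp T2.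
Proof.
move=> ne [E1|E1] [E2|E2]; subst; try by case: ne.
all: by case: e {ne} => [] [].
Qed.

Definition eps (e : ledge) : R := if dir_of e is Slo then -1 else 1.

Lemma eps2 e : eps e * eps e = 1.
Proof. by rewrite /eps; case: (dir_of e); rewrite ?mulr1 ?mulrNN ?mulr1. Qed.

Definition c0 (e : ledge) : R :=
  eps e * (if pselect (exists j, v j = Red e /\ adjT e (v j.+1) (upT e)) then -1
           else if pselect (exists j, v j = Red e) then 1 else 0).

Lemma isUp_upT e : isUp (upT e) = true. Proof. by case: e. Qed.
Lemma isUp_downT e : isUp (downT e) = false. Proof. by case: e => [] []. Qed.

Lemma c0_val k e T : v k.+1 = Red e -> adjT e (v k.+2) T ->
  c0 e = eps e * (if isUp T then -1 else 1).
Proof.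
move=> E A.
have [Tm [Tp [Am Ap ne [Cm Cp] [Nm Np]]]] := RedCyc E.
have ST : side T e by case: A.
rewrite /c0; case: pselect => [[j [Ej Aj]]|Hno].
  have Ev : v j.+1 = v k.+2 by apply: v_nextE; rewrite Ej E.
  have Aj' : adjT e (v k.+2) (upT e) by rewrite -Ev.
  have [ET|ET] := side_cases ST; first by rewrite ET isUp_upT.
  exfalso; case: Cm => Em; apply: Np; rewrite Em //; by rewrite -ET.
case: pselect => [?|H]; last by exfalso; apply: H; exists k.+1.
have [ET|ET] := side_cases ST; last by rewrite ET isUp_downT.
by exfalso; apply: Hno; exists k.+1; split => //; rewrite -ET.
Qed.

Lemma c0_out e : (forall j, v j <> Red e) -> c0 e = 0.
Proof.
move=> H; rewrite /c0; case: pselect => [[j [Ej ?]]|?]; first by case: (H j).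
by case: pselect => [[j Ej]|?]; [case: (H j)|rewrite mulr0].
Qed.

Definition sd1 (T : tri) : ledge :=
  match T with Up p q => LE Hor p q | Down p q => LE Slo p.+1 q end.
Definition sd2 (T : tri) : ledge :=
  match T with Up p q => LE Slo p q | Down p q => LE Hor p q.+1 end.
Definition sd3 (T : tri) : ledge :=
  match T with Up p q => LE Diag p q | Down p q => LE Diag p q end.

Definition defect (f : ledge -> R) (T : tri) : R :=
  eps (sd1 T) * f (sd1 T) + eps (sd2 T) * f (sd2 T) + eps (sd3 T) * f (sd3 T).

Definition ind (P : Prop) : R := if pselect P then 1 else 0.

Lemma ind_sum T a : side T a ->
  ind (sd1 T = a) + ind (sd2 T = a) + ind (sd3 T = a) = 1.
Proof.
rewrite /ind; case: T => p q /= [->|[->|->]];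
do 3 (case: pselect => ?); try congruence;
rewrite ?addr0 ?add0r //.
Qed.

Lemma sd_side T : [/\ side T (sd1 T), side T (sd2 T) & side T (sd3 T)].
Proof. by case: T => p q /=; split; auto. Qed.

Lemma blue_nb T x k : validTri n T -> fs_is_triangle n h T -> side T x ->
  v k.+1 = Red x -> v k = Blue T \/ v k.+2 = Blue T.
Proof.
move=> vT Htr S E.
have [Tm [Tp [Am Ap ne [Cm Cp] _]]] := RedCyc E.
have AT : adjT x (Blue T) T by split.
have [ET|ET] := side_cases S.
- case: Cm => Em.
    by left; apply: (lemB Am); rewrite Em -ET.
  case: Cp => Ep; last by case: ne; rewrite Em Ep.
  by right; apply: (lemB Ap); rewrite Ep -ET.
- case: Cm => Em.
    case: Cp => Ep; first by case: ne; rewrite Em Ep.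
    by right; apply: (lemB Ap); rewrite Ep -ET.
  by left; apply: (lemB Am); rewrite Em -ET.
Qed.

Lemma blue_defect T : validTri n T -> fs_is_triangle n h T -> defect c0 T = 0.
Proof.
move=> vT Htr.
case: (pselect (exists j, v j = Blue T)) => [[j Ej]|Hno]; last first.
  have Z : forall x, side T x -> c0 x = 0.
    move=> x S; apply: c0_out => j Ej.
    have [k [Ek _]] := v_pred j.
    rewrite Ej in Ek.
    by case: (blue_nb vT Htr S Ek) => E; apply: Hno; eexists; exact: E.
  have [S1 S2 S3] := sd_side T.
  by rewrite /defect (Z _ S1) (Z _ S2) (Z _ S3) !mulr0 !addr0.
have [k [Ek Ek2]] := v_pred j.
rewrite Ej in Ek.
have Ga := v_adj k; rewrite Ek in Ga.
have Gb := v_adj k.+1; rewrite Ek in Gb.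
case Eva: (v k) Ga => [t|a] Ga //=.
case Evb: (v k.+2) Gb => [t|b] Gb //=.
case: Ga => _ [_ Sa].
case: Gb => _ [_ Sb].
have nab : a <> b by move=> E; apply: (@v_neq2 k); rewrite Eva Evb E.
pose u : R := if isUp T then 1 else -1.
have AT : forall x, side T x -> adjT x (Blue T) T by move=> x S; split.
have ca : eps a * c0 a = - u.
  have [k' [E1 E2]] := v_pred k.
  rewrite Eva in E1; rewrite Ek in E2.
  rewrite (c0_val E1 (T := T)); last by rewrite E2; apply: AT.
  by rewrite mulrA eps2 mul1r /u; case: (isUp T); rewrite ?opprK.
have cb : eps b * c0 b = u.
  have [Tm [Tp [Am Ap ne [Cm Cp] _]]] := RedCyc Evb.
  rewrite Ek in Am; case: Am => _ [ETm _ _]; subst Tm.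
  rewrite (c0_val Evb Ap) mulrA eps2 mul1r /u.
  have HT : T = upT b \/ T = downT b by apply: side_cases.
  rewrite (updown ne HT Cp); by case: (isUp Tp).
have Hx : forall x, side T x -> eps x * c0 x = u * (ind (x = b) - ind (x = a)).
  move=> x S; rewrite /ind.
  case: pselect => [Exb|nb]; case: pselect => [Exa|na]; simpl.
  - by case: nab; rewrite -Exa Exb.
  - by rewrite Exb cb subr0 mulr1.
  - by rewrite Exa ca sub0r mulrN1.
  - rewrite subrr mulr0.
    suff -> : c0 x = 0 by rewrite mulr0.
    apply: c0_out => i Ei.
    have [k' [Ek' _]] := v_pred i.
    rewrite Ei in Ek'.
    case: (blue_nb vT Htr S Ek') => E.
      have := v_nextE (i := k') (j := k.+1); rewrite E Ek => /(_ erefl).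
      by rewrite Ek' Evb => [[]].
    have := v_prevE (i := k'.+1) (j := k); rewrite E Ek => /(_ erefl).
    by rewrite Ek' Eva => [[]].
have [S1 S2 S3] := sd_side T.
rewrite /defect (Hx _ S1) (Hx _ S2) (Hx _ S3).
have := ind_sum Sa; have := ind_sum Sb.
move=> Hb Ha.
rewrite -!mulrDr.
have -> : ind (sd1 T = b) - ind (sd1 T = a) + (ind (sd2 T = b) - ind (sd2 T = a)) +
    (ind (sd3 T = b) - ind (sd3 T = a)) =
  (ind (sd1 T = b) + ind (sd2 T = b) + ind (sd3 T = b)) -
  (ind (sd1 T = a) + ind (sd2 T = a) + ind (sd3 T = a)) by ring.
by rewrite Hb Ha subrr mulr0.
Qed.

Definition flatE (e : ledge) : Prop := rf (upT e) (downT e) /\ side (downT e) e.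

Definition cflat (e : ledge) : R :=
  match e with
  | LE Diag a b => c0 (LE Slo a b) - c0 (LE Hor a b)
  | LE Slo a b => c0 (LE Hor a b) + c0 (LE Diag a b)
  | LE Hor a b => c0 (LE Slo a b) - c0 (LE Diag a b)
  end.

Definition cc (e : ledge) : R := if pselect (flatE e) then cflat e else c0 e.

Lemma c_nf e : ~ flatE e -> cc e = c0 e.
Proof. by rewrite /cc; case: pselect. Qed.

Lemma c_f e : flatE e -> cc e = cflat e.
Proof. by rewrite /cc; case: pselect. Qed.

Lemma blue_nf T x : fs_is_triangle n h T -> side T x -> ~ flatE x.
Proof.
move=> Htr S [F _]; have [E|E] := side_cases S; subst.
  exact: blue_not_rf Htr F.
exact: blue_not_rf Htr (rf_sym F).
Qed.

Lemma rh_nf Tx Ty x : rf Tx Ty -> side Tx x -> ~ side Ty x -> ~ flatE x.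
Proof.
move=> H S NS [F Sd].
have C := rh_class H.
have [E|E] := side_cases S; subst.
- case: (C _ (fe_step F)) => E; first by exfalso; move: E; clear; case: x => [] [].
  by apply: NS; rewrite -E.
- case: (C _ (fe_step (rf_sym F))) => E; first by exfalso; move: E; clear; case: x => [] [].
  by apply: NS; rewrite -E; apply: side_upT.
Qed.

Lemma rf_rhombus T1 T2 : rf T1 T2 -> fs_is_rhombus n h T1.
Proof.
move=> H; have [v1 _] := rf_valid H.
case: (Hsmall v1) => // Htr; by case: (blue_not_rf Htr H).
Qed.

Lemma cons_eq k x y Tx Ty : v k = Red x -> v k.+1 = Red y ->
  adjT y (Red x) Ty -> isUp Tx = ~~ isUp Ty -> side Tx x -> adjT x (Red y) Tx ->
  eps x = eps y -> c0 x = c0 y.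
Proof.
move=> Ex Ey Ayx Hup Sx Axy Hee.
have [k' [E1 E2]] := v_pred k.
rewrite Ex in E1; rewrite Ey in E2.
rewrite (c0_val E1 (T := Tx)); last by rewrite E2.
have [Tm [Tp [Am Ap ne [Cm Cp] [Nm Np]]]] := RedCyc Ey.
rewrite (c0_val Ey Ap).
have STy : side Ty y by case: Ayx.
have nTp : Ty <> Tp by move=> E; apply: Nm; rewrite Ex -E.
have HTy := side_cases STy.
have Cp' := Cp.
have := updown nTp HTy Cp => E.
by rewrite Hup Hee E; case: (isUp Tp).
Qed.

Lemma pair_core Tx Ty x y : rf Tx Ty -> side Tx x -> side Ty y -> x <> y ->
  dir_of x = dir_of y -> (exists j, v j = Red x) -> c0 x = c0 y.
Proof.
move=> H Sx Sy nxy dxy [j Ej].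
have NSy : ~ side Ty x by move=> S; apply: nxy; apply: side_dir S Sy dxy.
have NSx : ~ side Tx y.
  by move=> S; apply: nxy; apply: side_dir Sx S dxy.
have C := rh_class H.
have Hr := rf_rhombus H.
have FSy : fs_side n h Tx y.
  split; first by exists Ty; split => //; apply: fe_step.
  move=> t1 t2 /C [->|->] /C [->|->] //.
have FSx : fs_side n h Tx x.
  split; first by exists Tx; split => //; apply: fe_refl.
  move=> t1 t2 /C [->|->] /C [->|->] //.
have Axy : adjT x (Red y) Tx.
  by split => //; exists Tx; split => //; apply: fe_refl.
have Ayx : adjT y (Red x) Ty.
  split => //; exists Tx; split => //; first by apply: fe_step.
  by move=> E; apply: nxy.
have Hup := rf_isUp H.
have Hee : eps x = eps y by rewrite /eps dxy.
have [k [Ek _]] := v_pred j; rewrite Ej in Ek.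
have [Tm [Tp [Am Ap ne [Cm Cp] _]]] := RedCyc Ek.
have HTx := side_cases Sx.
have [ETm|ETp] : Tx = Tm \/ Tx = Tp.
  by move: ne; case: HTx => ->; case: Cm => ->; case: Cp => ->; auto.
- subst Tm; have Ey := lemB Am Axy.
  apply/esym; apply: (cons_eq (Tx := Ty) (Ty := Tx) Ey Ek) => //.
  by rewrite Hup Bool.negb_involutive.
- subst Tp; have Ey := lemB Ap Axy.
  by apply: (cons_eq (Tx := Tx) (Ty := Ty) Ek Ey).
Qed.

Lemma pair_eq Tx Ty x y : rf Tx Ty -> side Tx x -> side Ty y -> x <> y ->
  dir_of x = dir_of y -> c0 x = c0 y.
Proof.
move=> H Sx Sy nxy dxy.
case: (pselect (exists j, v j = Red x)) => [Ex|Nx].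
  exact: pair_core H Sx Sy nxy dxy Ex.
case: (pselect (exists j, v j = Red y)) => [Ey|Ny].
  apply/esym; apply: pair_core (rf_sym H) Sy Sx _ _ Ey => //.
  by move=> E; apply: nxy.
rewrite !c0_out //.
- by move=> j E; apply: Ny; exists j.
- by move=> j E; apply: Nx; exists j.
Qed.

Ltac nsd := let H := fresh in intro H; simpl in H; repeat (destruct H as [H|H]);
  (discriminate || (injection H; intros; lia)).

Lemma rh1 p q : (p + q + 2 <= n)%N -> h p.+1 q + h p q.+1 = h p q + h p.+1 q.+1 ->
  [/\ defect cc (Up p q) = 0, defect cc (Down p q) = 0 &
      cc (LE Hor p q) = cc (LE Hor p q.+1)].
Proof.
move=> Hpq Eq.
have H : rf (Up p q) (Down p q).
  by exists p, q; split => //; constructor 1; split => //; right.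
have Hd : flatE (LE Diag p q) by split => //=; auto.
have n1 : ~ flatE (LE Hor p q) by apply: (rh_nf H); [simpl; auto | nsd].
have n2 : ~ flatE (LE Slo p q) by apply: (rh_nf H); [simpl; auto | nsd].
have n3 : ~ flatE (LE Hor p q.+1) by apply: (rh_nf (rf_sym H)); [simpl; auto | nsd].
have n4 : ~ flatE (LE Slo p.+1 q) by apply: (rh_nf (rf_sym H)); [simpl; auto | nsd].
have P1 : c0 (LE Hor p q) = c0 (LE Hor p q.+1).
  apply: (pair_eq H) => //=; auto; move=> [E]; lia.
have P2 : c0 (LE Slo p q) = c0 (LE Slo p.+1 q).
  apply: (pair_eq H) => //=; auto; move=> [E]; lia.
split; last by rewrite !c_nf // P1.
all: rewrite /defect /= /eps /= (c_f Hd) /= !c_nf // P1 P2; ring.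
Qed.

Lemma rh2 p q : (p + q + 2 <= n)%N -> h p.+1 q + h p.+1 q.+1 = h p q.+1 + h p.+2 q ->
  [/\ defect cc (Up p.+1 q) = 0, defect cc (Down p q) = 0 &
      cc (LE Hor p q.+1) = cc (LE Hor p.+1 q)].
Proof.
move=> Hpq Eq.
have H : rf (Up p.+1 q) (Down p q).
  by exists p, q; split => //; constructor 2; split => //; right.
have Hd : flatE (LE Slo p.+1 q) by split => //=; auto.
have n1 : ~ flatE (LE Hor p.+1 q) by apply: (rh_nf H); [simpl; auto | nsd].
have n2 : ~ flatE (LE Diag p.+1 q) by apply: (rh_nf H); [simpl; auto | nsd].
have n3 : ~ flatE (LE Hor p q.+1) by apply: (rh_nf (rf_sym H)); [simpl; auto | nsd].
have n4 : ~ flatE (LE Diag p q) by apply: (rh_nf (rf_sym H)); [simpl; auto | nsd].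
have P1 : c0 (LE Hor p.+1 q) = c0 (LE Hor p q.+1).
  apply: (pair_eq H) => //=; auto; move=> [E]; lia.
have P2 : c0 (LE Diag p.+1 q) = c0 (LE Diag p q).
  apply: (pair_eq H) => //=; auto; move=> [E]; lia.
split; last by rewrite !c_nf // P1.
all: rewrite /defect /= /eps /= (c_f Hd) /= !c_nf // P1 P2; ring.
Qed.

Lemma rh3 p q : (p + q + 2 <= n)%N -> h p q.+1 + h p.+1 q.+1 = h p.+1 q + h p q.+2 ->
  [/\ defect cc (Up p q.+1) = 0, defect cc (Down p q) = 0 &
      cc (LE Slo p.+1 q) = cc (LE Slo p q.+1)].
Proof.
move=> Hpq Eq.
have H : rf (Up p q.+1) (Down p q).
  by exists p, q; split => //; constructor 3; split => //; right.
have Hd : flatE (LE Hor p q.+1) by split => //=; auto.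
have n1 : ~ flatE (LE Slo p q.+1) by apply: (rh_nf H); [simpl; auto | nsd].
have n2 : ~ flatE (LE Diag p q.+1) by apply: (rh_nf H); [simpl; auto | nsd].
have n3 : ~ flatE (LE Slo p.+1 q) by apply: (rh_nf (rf_sym H)); [simpl; auto | nsd].
have n4 : ~ flatE (LE Diag p q) by apply: (rh_nf (rf_sym H)); [simpl; auto | nsd].
have P1 : c0 (LE Slo p q.+1) = c0 (LE Slo p.+1 q).
  apply: (pair_eq H) => //=; auto; move=> [E]; lia.
have P2 : c0 (LE Diag p q.+1) = c0 (LE Diag p q).
  apply: (pair_eq H) => //=; auto; move=> [E]; lia.
split; last by rewrite !c_nf // P1.
all: rewrite /defect /= /eps /= (c_f Hd) /= !c_nf // P1 P2; ring.
Qed.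

Lemma closed_all T : validTri n T -> defect cc T = 0.
Proof.
move=> vT; case: (Hsmall vT) => [Htr|[t' [Ht' _]]].
  have [S1 S2 S3] := sd_side T.
  rewrite /defect !c_nf; try exact: (blue_nf Htr).
  exact: blue_defect.
have : exists p q, (p + q + 2 <= n)%N /\
   [\/ upair T t' (Down p q) (Up p q) /\ h p.+1 q + h p q.+1 = h p q + h p.+1 q.+1,
       upair T t' (Down p q) (Up p.+1 q) /\ h p.+1 q + h p.+1 q.+1 = h p q.+1 + h p.+2 q
     | upair T t' (Down p q) (Up p q.+1) /\ h p q.+1 + h p.+1 q.+1 = h p.+1 q + h p q.+2]
  by exact: Ht'.
move=> [p [q [Hpq [[U E]|[U E]|[U E]]]]].
- have [A B _] := rh1 Hpq E; by case: U => [[-> _]|[-> _]].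
- have [A B _] := rh2 Hpq E; by case: U => [[-> _]|[-> _]].
- have [A B _] := rh3 Hpq E; by case: U => [[-> _]|[-> _]].
Qed.

Lemma red_nf e : is_gvert n h (Red e) -> ~ flatE e.
Proof.
move=> [t [vt [[t1 [H1 S1]] U]]] [F Sd].
have [E|E] := side_cases S1; subst t1.
- have := U _ _ H1 (fe_trans H1 (fe_step F)) S1 Sd.
  by case: e {H1 S1 U F Sd} => [] [].
- have := U _ _ H1 (fe_trans H1 (fe_step (rf_sym F))) S1 (side_upT e).
  by case: e {H1 S1 U F Sd} => [] [].
Qed.

Lemma c_border e : ~ (side (downT e) e /\ validTri n (downT e)) -> cc e = 0.
Proof.
move=> Nd; rewrite c_nf; last first.
  by move=> [F Sd]; apply: Nd; split => //; exact: (rf_valid F).2.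
apply: c0_out => j Ej.
have [k [Ek _]] := v_pred j; rewrite Ej in Ek.
have [Tm [Tp [Am Ap ne [Cm Cp] _]]] := RedCyc Ek.
have Vm := adjT_valid Am; have Vp := adjT_valid Ap.
have Sm : side Tm e by case: Am.
have Sp : side Tp e by case: Ap.
apply: Nd; case: Cm => Em; last by rewrite -Em.
case: Cp => Ep; last by rewrite -Ep.
by case: ne; rewrite Em Ep.
Qed.

Lemma nontrivial : exists e, cc e != 0 /\ validTri n (upT e).
Proof.
have G := v_adj 0.
have [j Ej] : exists j e, v j = Red e.
  case E0: (v 0) G => [t|e] G; last by exists 0%N, e.
  case E1: (v 1) G => [t'|e'] G //; by exists 1%N, e'.
case: Ej => e Ej; exists e.
have [k [Ek _]] := v_pred j; rewrite Ej in Ek.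
have [Tm [Tp [Am Ap ne [Cm Cp] _]]] := RedCyc Ek.
have Vm := adjT_valid Am; have Vp := adjT_valid Ap.
split.
  rewrite c_nf; last by apply: red_nf; rewrite -Ej; exact: v_gvert.
  rewrite (c0_val Ek Ap) /eps.
  by case: (dir_of e); case: (isUp Tp); rewrite ?mulr1 ?mul1r ?mulrN1 ?oppr_eq0 ?oner_eq0.
by case: Cm => Em; [rewrite -Em | case: Cp => Ep; [rewrite -Ep|case: ne; rewrite Em Ep]].
Qed.

Definition W (p q : nat) : R :=
  \sum_(i < p) cc (LE Hor i 0) + \sum_(j < q) cc (LE Slo p j).

Lemma CU p q : (p + q + 1 <= n)%N ->
  cc (LE Hor p q) - cc (LE Slo p q) + cc (LE Diag p q) = 0.
Proof.
move=> H; have := closed_all (T := Up p q) H.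
by rewrite /defect /eps /= mul1r mulN1r mul1r.
Qed.

Lemma CD p q : (p + q + 2 <= n)%N ->
  - cc (LE Slo p.+1 q) + cc (LE Hor p q.+1) + cc (LE Diag p q) = 0.
Proof.
move=> H; have := closed_all (T := Down p q) H.
by rewrite /defect /eps /= mul1r mulN1r mul1r.
Qed.

Lemma WS p q : W p q.+1 = W p q + cc (LE Slo p q).
Proof. by rewrite /W big_ord_recr /= addrA. Qed.

Lemma WH p q : (p + q + 1 <= n)%N -> W p.+1 q = W p q + cc (LE Hor p q).
Proof.
elim: q => [|q IH] Hq.
  by rewrite /W !big_ord0 !addr0 big_ord_recr.
rewrite !WS IH; last lia.
have := CU (p := p) (q := q) ltac:(lia).
have := CD (p := p) (q := q) ltac:(lia).
move=> A B; lra.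
Qed.

Lemma WD p q : (p + q + 1 <= n)%N -> W p q.+1 = W p.+1 q + cc (LE Diag p q).
Proof.
move=> H; rewrite WS WH //.
have := CU H; move=> A; lra.
Qed.

Lemma W_border p q : onB n p q -> W p q = 0.
Proof.
move=> /andP [Hin /or3P [/eqP E|/eqP E|/eqP E]]; subst.
- rewrite /W big_ord0 add0r big1 // => j _; apply: c_border => /= [[S _]].
  by move: S => [|[|]] [].
- rewrite /W big_ord0 addr0 big1 // => i _; apply: c_border => /= [[S _]].
  by move: S => [|[|]] [].
- elim: q p E {Hin} => [|q IH] p E.
    rewrite addn0 in E; subst.
    rewrite /W big_ord0 addr0 big1 // => i _; apply: c_border => /= [[S _]].
    by move: S => [|[|]] [].
  rewrite WD; last lia.
  rewrite IH; last lia.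
  rewrite add0r; apply: c_border => /= [[_ V]]; lia.
Qed.

Lemma min1D (G : nat -> R) : (forall i, 0 < G i) ->
  forall N, exists e, 0 < e /\ forall i, (i < N)%N -> e <= G i.
Proof.
move=> HG; elim=> [|N [e [He Hb]]]; first by exists 1; split => //.
exists (Num.min e (G N)); split; first by rewrite lt_min He HG.
move=> i Hi; rewrite ge_min; case: (ltnP i N) => Hlt.
  by rewrite Hb.
have -> : i = N by lia.
by rewrite lexx orbT.
Qed.

Lemma min2D (F : nat -> nat -> R) : (forall i j, 0 < F i j) ->
  forall N, exists e, 0 < e /\ forall i j, (i < N)%N -> (j < N)%N -> e <= F i j.
Proof.
move=> HF; elim=> [|N [e [He Hb]]]; first by exists 1; split => //.
have [e1 [He1 Hb1]] := min1D (G := F N) (fun j => HF N j) N.+1.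
have [e2 [He2 Hb2]] := min1D (G := fun i => F i N) (fun i => HF i N) N.+1.
exists (Num.min e (Num.min e1 e2)); split; first by rewrite !lt_min He He1 He2.
move=> i j Hi Hj; rewrite !ge_min.
case: (ltnP i N) => Hi1; case: (ltnP j N) => Hj1.
- by rewrite Hb.
- have -> : j = N by lia. by rewrite Hb2 ?orbT.
- have -> : i = N by lia. by rewrite Hb1 ?orbT.
- have -> : i = N by lia. by rewrite Hb1 ?orbT.
Qed.

Hypothesis Hh : hive n h.
Hypothesis Hext : is_extreme_hive n h.

Definition Q1 (f : nat -> nat -> R) p q := f p.+1 q + f p q.+1 - (f p q + f p.+1 q.+1).
Definition Q2 (f : nat -> nat -> R) p q := f p.+1 q + f p.+1 q.+1 - (f p q.+1 + f p.+2 q).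
Definition Q3 (f : nat -> nat -> R) p q := f p q.+1 + f p.+1 q.+1 - (f p.+1 q + f p q.+2).

Definition phi (a b : R) : R := if 0 < a then a / (1 + `|b|) else 1.

Lemma phi_gt0 a b : 0 < phi a b.
Proof.
rewrite /phi; case: ifP => // Ha; apply: divr_gt0 => //.
have := normr_ge0 b; lra.
Qed.

Lemma phi_bound e a b : 0 < e -> 0 <= a -> (a = 0 -> b = 0) -> e <= phi a b ->
  - a <= e * b <= a.
Proof.
move=> He Ha Hab; rewrite /phi; case: ifP => Hpos.
  have Hd : 0 < 1 + `|b| by have := normr_ge0 b; lra.
  rewrite ler_pdivlMr // => Hle.
  have : `|e * b| <= a.
    rewrite normrM (gtr0_norm He).
    have := normr_ge0 b; nra.
  by rewrite ler_norml.
move=> _; have Ea : a = 0 by move/negbT: Hpos; rewrite -leNgt => ?; lra.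
by rewrite Ea (Hab Ea) mulr0 oppr0 lexx.
Qed.

Lemma main_contra : False.
Proof.
pose F p q := Num.min (phi (Q1 h p q) (Q1 W p q))
   (Num.min (phi (Q2 h p q) (Q2 W p q)) (phi (Q3 h p q) (Q3 W p q))).
have HF : forall p q, 0 < F p q by move=> p q; rewrite !lt_min !phi_gt0.
have [e [He Hb]] := min2D HF n.+1.
pose g1 p q := h p q + e * W p q.
pose g2 p q := h p q - e * W p q.
have B : forall p q, (p + q + 2 <= n)%N ->
  [/\ - Q1 h p q <= e * Q1 W p q <= Q1 h p q,
      - Q2 h p q <= e * Q2 W p q <= Q2 h p q &
      - Q3 h p q <= e * Q3 W p q <= Q3 h p q].
  move=> p q Hpq.
  have [H1 H2 H3] := Hh Hpq.
  have := Hb p q ltac:(lia) ltac:(lia); rewrite /F !le_min => /andP [b1 /andP [b2 b3]].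
  split.
  - apply: phi_bound => //; first by rewrite /Q1; lra.
    move=> E0; have E : h p.+1 q + h p q.+1 = h p q + h p.+1 q.+1 by move: E0; rewrite /Q1; lra.
    have [_ _ Ec] := rh1 Hpq E.
    rewrite /Q1 WH ?(WH (q := q.+1)); try lia; rewrite Ec; ring.
  - apply: phi_bound => //; first by rewrite /Q2; lra.
    move=> E0; have E : h p.+1 q + h p.+1 q.+1 = h p q.+1 + h p.+2 q by move: E0; rewrite /Q2; lra.
    have [_ _ Ec] := rh2 Hpq E.
    rewrite /Q2 (WH (p := p.+1)) ?(WH (q := q.+1)); try lia; rewrite Ec; ring.
  - apply: phi_bound => //; first by rewrite /Q3; lra.
    move=> E0; have E : h p q.+1 + h p.+1 q.+1 = h p.+1 q + h p q.+2 by move: E0; rewrite /Q3; lra.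
    have [_ _ Ec] := rh3 Hpq E.
    rewrite /Q3 !WS Ec; ring.
have hg1 : hive n g1.
  move=> p q Hpq; have [B1 B2 B3] := B p q Hpq; move: B1 B2 B3.
  rewrite /g1 /Q1 /Q2 /Q3 => /andP [? ?] /andP [? ?] /andP [? ?]; split; lra.
have hg2 : hive n g2.
  move=> p q Hpq; have [B1 B2 B3] := B p q Hpq; move: B1 B2 B3.
  rewrite /g2 /Q1 /Q2 /Q3 => /andP [? ?] /andP [? ?] /andP [? ?]; split; lra.
have bg1 : forall p q, onB n p q -> g1 p q = h p q.
  by move=> p q Hb'; rewrite /g1 W_border // mulr0 addr0.
have bg2 : forall p q, onB n p q -> g2 p q = h p q.
  by move=> p q Hb'; rewrite /g2 W_border // mulr0 subr0.
have Ht : 0 < (2^-1 : R) < 1 by apply/andP; split; lra.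
have Hc : forall p q, inH n p q -> h p q = 2^-1 * g1 p q + (1 - 2^-1) * g2 p q.
  by move=> p q _; rewrite /g1 /g2; field.
have Eq := Hext hg1 hg2 bg1 bg2 Ht Hc.
have W0 : forall p q, inH n p q -> W p q = 0.
  move=> p q Hin; have := Eq p q Hin; rewrite /g1 /g2 => E.
  have : 2 * e * W p q = 0 by lra.
  by move/eqP; rewrite !mulf_eq0 (gt_eqF He) /= pnatr_eq0 /= => /eqP.
have [[d p q] [Hne Hv]] := nontrivial.
move: Hne; rewrite /= in Hv; case: d => /=.
- rewrite -[cc _](@addKr _ (W p q)) -WH // !W0 /inH; try lia.
  by rewrite oppr0 addr0 eqxx.
- rewrite -[cc _](@addKr _ (W p q)) -WS !W0 /inH; try lia.
  by rewrite oppr0 addr0 eqxx.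
- rewrite -[cc _](@addKr _ (W p.+1 q)) -WD // !W0 /inH; try lia.
  by rewrite oppr0 addr0 eqxx.
Qed.

End Hive.

Theorem lemma3p1 (R : realType) (n : nat) (h : nat -> nat -> R) :
  (1 <= n)%N -> hive n h -> flatspaces_small n h -> is_extreme_hive n h ->
  acyclic n h.
Proof.
move=> _ Hh Hs He [v0 [s [Hsz Hnd Hg Hp Hl]]].
exact: (main_contra Hs Hsz Hnd Hg Hp Hl Hh He).
Qed.
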